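(* Let $G=(V,E)$ be a wireless sensor network whose nodes are points in the Euclidean plane, with a sink $v_s\in V$, operating under an interference model $\mathcal M$. Let $\mathcal Q$ be a finite set of periodic data collection queries, where the $i$-th query has source set $\mathcal S_i\subseteq V$, per-link transmission time $\chi_i>0$ per data unit, period $\mathbf p_i>0$, initial release time $\mathbf a_i$ and relative deadline $\mathbf d_i$. If $\mathcal Q$ is schedulable, then $$\ell_{G,\mathcal Q}(g_{v,h})\le c_1(\mathcal M)\quad\text{for every interference-aware region } g_{v,h}\ (v,h\in\mathbb Z),$$ and $$\sum_{i}\frac{|\mathcal S_i|\cdot\chi_i}{\mathbf p_i}\le 1 .$$
   Context: Network model: two nodes can communicate if they are within transmission range of each other; $E$ is the set of communication links. An interference model $\mathcal M$ specifies which sets of links can transmit simultaneously (interference-free). Examples: the protocol interference model, the RTS/CTS model and the physical (SINR) interference model. The interference-aware radius $\lambda(\mathcal M)$ is the maximum possible distance between two senders such that the corresponding two links interfere under $\mathcal M$; hence nodes pairwise more than $\lambda(\mathcal M)$ apart can transmit concurrently. Partition the plane by the vertical lines $x=i\lambda(\mathcal M)$ and horizontal lines $y=j\lambda(\mathcal M)$, $i,j\in\mathbb Z$; the square between $x=v\lambda(\mathcal M)$, $x=(v+1)\lambda(\mathcal M)$, $y=h\lambda(\mathcal M)$, $y=(h+1)\lambda(\mathcal M)$ is the interference-aware region $g_{v,h}$. The constant $c_1(\mathcal M)\ge 1$ is the maximum number of nodes that can transmit concurrently in any interference-aware region under $\mathcal M$. Queries: each source $v\in\mathcal S_i$ generates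 one data unit for the $i$-th query per period; the $t$-th instance of query $i$ is released at $\mathbf a_i+(t-1)\mathbf p_i$ and its data (the raw data unit from every node of $\mathcal S_i$, collected without aggregation) must be received by the sink by $\mathbf a_i+(t-1)\mathbf p_i+\mathbf d_i$. Transmitting one data unit of query $i$ over any link takes time $\chi_i$. The set $\mathcal Q$ is schedulable if there exist routing and an interference-free schedule of node transmissions (when each node transmits and which packets) under $\mathcal M$ such that every instance of every query meets its deadline. Initial load: for $u\in V$, $\ell_{G,\mathcal Q}(u)=\sum_{j:\,u\in\mathcal S_j}\chi_j/\mathbf p_j$; for a region $g$, $\ell_{G,\mathcal Q}(g)=\sum_{u\in V(g)}\ell_{G,\mathcal Q}(u)$, where $V(g)$ is the set of nodes of $V$ lying in $g$. *)

(* Defs.v *)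
From HB Require Import structures.
From mathcomp Require Import all_boot all_order all_algebra.
From mathcomp Require Import reals.
Set Implicit Arguments. Unset Strict Implicit. Unset Printing Implicit Defensive.
Import Order.TTheory GRing.Theory Num.Theory.
Local Open Scope ring_scope.

Section WSN.
Variable R : realType.

Definition pt := (R * R)%type.
Definition dist2 (a b : pt) : R := (a.1 - b.1) ^+ 2 + (a.2 - b.2) ^+ 2.

(* A geometric link: (position of sender, position of receiver). *)
Definition glink := (pt * pt)%type.

(* An interference model: which (finite) lists of links can transmit
   simultaneously, interference-free.  It depends only on geometry. *)
Definition interference_model := seq glink -> Prop.

Definition interferes (M : interference_model) (e1 e2 : glink) : Prop :=
  M [:: e1] /\ M [:: e2] /\ ~ M [:: e1; e2].

Definition is_interference_radius (M : interference_model) (lam : R) : Prop :=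
  0 < lam /\
  (forall e1 e2, interferes M e1 e2 -> dist2 e1.1 e2.1 <= lam ^+ 2) /\
  (exists e1 e2, interferes M e1 e2 /\ dist2 e1.1 e2.1 = lam ^+ 2).

(* interference-aware region g_{v,h} (half-open squares, a partition) *)
Definition in_region (lam : R) (v h : int) (x : pt) : bool :=
  (v%:~R * lam <= x.1 < (v + 1)%:~R * lam) &&
  (h%:~R * lam <= x.2 < (h + 1)%:~R * lam).

Definition concurrent_in_region (M : interference_model) (lam : R) (v h : int)
    (L : seq glink) : Prop :=
  M L /\ uniq (map fst L) /\ all (in_region lam v h) (map fst L).

Definition is_c1 (M : interference_model) (lam : R) (c : nat) : Prop :=
  (forall v h L, concurrent_in_region M lam v h L -> (size L <= c)%N) /\
  (exists v h L, concurrent_in_region M lam v h L /\ size L = c).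

Definition comm_link (V : finType) (pos : V -> pt) (r : R) (u w : V) : bool :=
  (u != w) && (dist2 (pos u) (pos w) <= r ^+ 2).

Record query (V : finType) := Query {
  q_src : {set V};
  q_chi : R;
  q_p   : R;
  q_a   : R;
  q_d   : R
}.

(* Release time and absolute deadline of instance number t.+1 (t : nat). *)
Definition release (V : finType) (q : query V) (t : nat) : R := q_a q + t%:R * q_p q.
Definition deadline (V : finType) (q : query V) (t : nat) : R := release q t + q_d q.

(* A route of one data unit: the successive hops (receiver, start time).
   [valid_route E chi sink x tmin dl r]: starting at node x, the next hop may
   start at time >= tmin; each hop uses a link of E and lasts chi; the data
   unit must have arrived at the sink by dl. *)
Fixpoint valid_route (V : finType) (E : rel V) (chi : R) (sink : V) (x : V)
    (tmin dl : R) (r : seq (V * R)) : Prop :=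
  match r with
  | [::] => x = sink /\ tmin <= dl
  | (y, s) :: r' => E x y /\ tmin <= s /\ valid_route E chi sink y (s + chi) dl r'
  end.

Fixpoint route_tx (V : finType) (x : V) (r : seq (V * R)) : seq (V * V * R) :=
  match r with
  | [::] => [::]
  | (y, s) :: r' => (x, y, s) :: route_tx y r'
  end.

(* A schedule assigns a route to every data unit (query i, instance t.+1,
   source v); no aggregation: every raw data unit is routed separately. *)
Definition schedule (V : finType) (n : nat) := 'I_n -> nat -> V -> seq (V * R).

(* identifier of a transmission: (query, instance, source, hop index) *)
Definition tx_id (V : finType) (n : nat) := ('I_n * nat * V * nat)%type.

Definition tx_of (V : finType) (n : nat) (sc : schedule V n) (id : tx_id V n) : V * V * R :=
  let: (i, t, v, k) := id in nth (v, v, 0) (route_tx v (sc i t v)) k.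

Definition tx_exists (V : finType) (n : nat) (Q : 'I_n -> query V) (sc : schedule V n)
    (id : tx_id V n) : bool :=
  let: (i, t, v, k) := id in (v \in q_src (Q i)) && (k < size (sc i t v))%N.

Definition tx_active (V : finType) (n : nat) (Q : 'I_n -> query V) (sc : schedule V n)
    (tau : R) (id : tx_id V n) : bool :=
  tx_exists Q sc id &&
  let: (i, _, _, _) := id in
  let: (_, _, s) := tx_of sc id in (s <= tau) && (tau < s + q_chi (Q i)).

Definition interference_free (V : finType) (n : nat) (pos : V -> pt) (M : interference_model)
    (Q : 'I_n -> query V) (sc : schedule V n) : Prop :=
  forall (tau : R) (L : seq (tx_id V n)),
    uniq L -> all (tx_active Q sc tau) L ->
    let T := map (tx_of sc) L in
    uniq (map (fun x => x.1.1) T) /\ uniq (map (fun x => x.1.2) T) /\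
    M (map (fun x => (pos x.1.1, pos x.1.2)) T).

Definition schedulable (V : finType) (n : nat) (pos : V -> pt) (E : rel V) (sink : V)
    (M : interference_model) (Q : 'I_n -> query V) : Prop :=
  exists sc : schedule V n,
    (forall i t v, v \in q_src (Q i) ->
       valid_route E (q_chi (Q i)) sink v (release (Q i) t)
                   (deadline (Q i) t) (sc i t v)) /\
    interference_free pos M Q sc.

Definition node_load (V : finType) (n : nat) (Q : 'I_n -> query V) (u : V) : R :=
  \sum_(j < n | u \in q_src (Q j)) q_chi (Q j) / q_p (Q j).

Definition region_load (V : finType) (n : nat) (pos : V -> pt) (Q : 'I_n -> query V)
    (lam : R) (v h : int) : R :=
  \sum_(u : V | in_region lam v h (pos u)) node_load Q u.

End WSN.

(* Main.v *)
Require Import Defs.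
From HB Require Import structures.
From mathcomp Require Import all_boot all_order all_algebra.
From mathcomp Require Import reals.
From mathcomp Require Import lra ring.
Import Order.TTheory GRing.Theory Num.Theory.
Local Open Scope ring_scope.
Section Pack.
Variable R : realType.

Lemma sum_ind (I : finType) (P Q : pred I) :
  \sum_(i | P i) ((Q i)%:R : R) = #|[pred i | P i && Q i]|%:R.
Proof.
rewrite (eq_bigr (fun i => if Q i then 1 else 0)); last by move=> i _; case: (Q i).
by rewrite -big_mkcondr /= sumr_const.
Qed.

Lemma pack (I : finType) (P : pred I) (c : nat) (A : R) : forall (k : nat) (s e : I -> R) (B : R),
  (#|[pred i | P i && (s i < e i)%R]| <= k)%N ->
  A <= B ->
  (forall i, P i -> [/\ A <= s i, s i <= e i & e i <= B]) ->
  (forall tau, #|[pred i | P i && (s i <= tau < e i)%R]| <= c)%N ->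
  \sum_(i | P i) (e i - s i) <= c%:R * (B - A).
Proof.
elim=> [|k IH] s e B hk hAB hin hc.
  rewrite big1 ?mulr_ge0 ?subr_ge0 // => i Pi.
  have := hin i Pi => -[_ hse _].
  move: hk; rewrite leqn0 => /eqP/card0_eq/(_ i); rewrite !inE /= Pi /=.
  move/negbT; rewrite -leNgt => hes; apply/eqP; rewrite subr_eq0 eq_le hse hes //=.
case: (pickP [pred i | P i && (s i < e i)]) => [i0 hi0|hnone]; last first.
  rewrite big1 ?mulr_ge0 ?subr_ge0 // => i Pi.
  have := hin i Pi => -[_ hse _].
  have : P i && (s i < e i) = false := hnone i; rewrite Pi /=.
  move/negbT; rewrite -leNgt => hes; apply/eqP; rewrite subr_eq0 eq_le hse hes //=.
case: (arg_maxP s hi0) => j0 /= /andP[Pj0 hj0] hmax.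
set x := s j0.
have hAx : A <= x by case: (hin j0 Pj0).
have hxB : x <= B by case: (hin j0 Pj0) => _ h1 h2; rewrite /x; lra.
have split1 : forall i, e i - s i = (Num.min (e i) x - Num.min (s i) x) + (Num.max (e i) x - Num.max (s i) x).
  move=> i; have h1 := addr_min_max (e i) x; have h2 := addr_min_max (s i) x; lra.
rewrite (eq_bigr _ (fun i _ => split1 i)) big_split /=.
have -> : c%:R * (B - A) = c%:R * (x - A) + c%:R * (B - x) by rewrite -mulrDr; congr (_ * _); lra.
apply: lerD.
  apply: IH => //.
  - rewrite -ltnS; apply: leq_trans hk; apply: proper_card; apply/properP; split.
      apply/subsetP => i; rewrite !inE => /andP[Pi hlt]; rewrite Pi /=.
      case: (lerP (e i) (s i)) => // hes.
      move: hlt; rewrite ltNge; case/negP.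
      by apply: le_min2.
    exists j0; first by rewrite !inE Pj0 hj0.
    by rewrite !inE Pj0 /= /x !min_r ?ltxx // ltW.
  - move=> i Pi; have [h1 h2 h3] := hin i Pi; split.
    + by rewrite le_min h1 hAx.
    + exact: le_min2.
    + by rewrite ge_min lexx orbT.
  - move=> tau; apply: leq_trans (hc tau); apply: subset_leq_card; apply/subsetP => i.
    rewrite !inE => /andP[Pi /andP[h1 h2]]; rewrite Pi /=.
    have [hs1 hs2] : s i <= tau /\ tau < e i.
      move: h1 h2; rewrite ge_min lt_min => /orP[h1 | h1] /andP[h2 h3] //.
      by move: (lt_le_trans h3 h1); rewrite ltxx.
    by rewrite hs1 hs2.
have hbound : forall i, P i -> Num.max (e i) x - Num.max (s i) x <= ((s i <= x < e i)%R)%:R * (B - x).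
  move=> i Pi; have [h1 h2 h3] := hin i Pi.
  case: (lerP (e i) x) => hex.
    by rewrite (max_r (le_trans h2 hex)) subrr andbF mul0r.
  case: (lerP (s i) x) => hsx.
    by rewrite /= mul1r; lra.
  case: (ltrP (s i) (e i)) => hse.
    by have := hmax i; rewrite Pi hse => /(_ isT); rewrite leNgt hsx.
  rewrite /= mul0r; lra.
apply: le_trans (ler_sum _ hbound) _.
rewrite -mulr_suml sum_ind ler_wpM2r ?subr_ge0 // ler_nat.
exact: hc.
Qed.

Lemma term_le_sum n (F : 'I_n -> R) i : (forall j, 0 <= F j) -> F i <= \sum_(j < n) F j.
Proof.
move=> h; rewrite (bigD1 i) //= lerDl; apply: sumr_ge0 => j _; exact: h.
Qed.

Lemma core (V : finType) n (Q : 'I_n -> query R V) (S' : 'I_n -> {set V})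
    (st : 'I_n -> nat -> V -> R) (c : nat) :
  (forall i, 0 < q_chi (Q i)) -> (forall i, 0 < q_p (Q i)) ->
  (forall i t u, u \in S' i -> release (Q i) t <= st i t u /\
                  st i t u + q_chi (Q i) <= deadline (Q i) t) ->
  (forall (K : nat) (tau : R),
     (#|[pred x : 'I_n * 'I_K * V | (x.2 \in S' x.1.1) &&
        (st x.1.1 x.1.2 x.2 <= tau < st x.1.1 x.1.2 x.2 + q_chi (Q x.1.1))%R]| <= c)%N) ->
  \sum_(i < n) #|S' i|%:R * q_chi (Q i) / q_p (Q i) <= c%:R.
Proof.
move=> hchi hp hwin hcnt.
set X := \sum_(i < n) _.
set K0 := \sum_(i < n) #|S' i|%:R * q_chi (Q i).
set D := \sum_(i < n) (`|q_a (Q i)| + `|q_d (Q i)|).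
rewrite leNgt; apply/negP => hX.
have hK0 : 0 <= K0 by apply: sumr_ge0 => i _; rewrite mulr_ge0 // ltW.
have hD : 0 <= D by apply: sumr_ge0 => i _; rewrite addr_ge0.
have hDi : forall i, `|q_a (Q i)| + `|q_d (Q i)| <= D.
  by move=> i; apply: (@term_le_sum n (fun j => `|q_a (Q j)| + `|q_d (Q j)|)) => j; rewrite addr_ge0.
set T := (K0 + c%:R * (D + D)) / (X - c%:R) + 1.
have hXc : 0 < X - c%:R by rewrite subr_gt0.
have hT0 : 0 <= (K0 + c%:R * (D + D)) / (X - c%:R).
  apply: divr_ge0; last exact: ltW. apply: addr_ge0 => //; apply: mulr_ge0; [exact: ler0n | lra].
have hT : 0 < T by rewrite /T; lra.
have hTX : T * (X - c%:R) = K0 + c%:R * (D + D) + (X - c%:R).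
  by rewrite /T mulrDl mul1r divfK // gt_eqF.
pose N i := Num.Def.trunc (T / q_p (Q i)).
pose Km := (\sum_(i < n) N i).+1.
have hNK : forall i, (N i <= Km)%N.
  by move=> i; rewrite /Km; apply: leqW; rewrite (bigD1 i) //= leq_addr.
have hNle : forall i, (N i)%:R * q_p (Q i) <= T.
  move=> i; rewrite -ler_pdivlMr // truncn_le divr_ge0 // ?ltW //.
have hNge : forall i, T / q_p (Q i) - 1 <= (N i)%:R.
  move=> i; have := truncnS_gt (T / q_p (Q i)); rewrite -/(N i) -natr1 => h; lra.
pose P := [pred x : 'I_n * 'I_Km * V | (x.1.2 < N x.1.1)%N && (x.2 \in S' x.1.1)].
pose s (x : 'I_n * 'I_Km * V) := st x.1.1 x.1.2 x.2.
pose e (x : 'I_n * 'I_Km * V) := s x + q_chi (Q x.1.1).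
have := @pack _ P c (- D) _ s e (T + D) (leqnn _).
have hAB : - D <= T + D by lra.
have hin : forall x, P x -> [/\ - D <= s x, s x <= e x & e x <= T + D].
  case=> [[i t] u] /andP /= [ht hu]; have [h1 h2] := hwin i t u hu.
  move: h1 h2; rewrite /deadline /release /s /e /= => h1 h2.
  have ha := ler_norm (- q_a (Q i)); rewrite normrN in ha.
  have hd := ler_norm (q_d (Q i)).
  have hn := normr_ge0 (q_a (Q i)).
  have hn2 := normr_ge0 (q_d (Q i)).
  have hDi' := hDi i.
  have htp : 0 <= (t : nat)%:R * q_p (Q i) by rewrite mulr_ge0 // ltW.
  have htT : (t : nat)%:R * q_p (Q i) <= T.
    apply: le_trans (hNle i); apply: ler_wpM2r; [exact: ltW | rewrite ler_nat; exact: ltnW].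
  have ha2 := ler_norm (q_a (Q i)).
  have := hchi i; split; rewrite /e /s /=; lra.
have hcnt' : forall tau, (#|[pred x | P x && (s x <= tau < e x)%R]| <= c)%N.
  move=> tau; apply: leq_trans (hcnt Km tau); apply: subset_leq_card.
  apply/subsetP => x; rewrite !inE => /andP[/andP[_ hu] hi]; by rewrite hu.
move=> /(_ hAB hin hcnt').
have -> : \sum_(x | P x) (e x - s x) = \sum_(i < n) (N i)%:R * (#|S' i|%:R * q_chi (Q i)).
  have hes : forall x, e x - s x = q_chi (Q x.1.1).
    by move=> x; rewrite /e /= [s x + _]addrC addrK.
  rewrite (eq_bigr _ (fun x _ => hes x)).
  transitivity (\sum_(y : 'I_n * 'I_Km | (y.2 < N y.1)%N) \sum_(u | u \in S' y.1) q_chi (Q y.1)).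
    symmetry; exact: (pair_big_dep (fun y : 'I_n * 'I_Km => (y.2 < N y.1)%N) (fun y u => u \in S' y.1) (fun y _ => q_chi (Q y.1))).
  transitivity (\sum_(i < n) \sum_(t < Km | (t < N i)%N) q_chi (Q i) *+ #|S' i|).
    rewrite (eq_bigr (fun y => q_chi (Q y.1) *+ #|S' y.1|)); last by move=> y _; rewrite sumr_const.
    rewrite (eq_bigl (fun y : 'I_n * 'I_Km => xpredT y.1 && (y.2 < N y.1)%N)) //.
    symmetry; exact: (pair_big_dep xpredT (fun i (t : 'I_Km) => (t < N i)%N) (fun i _ => q_chi (Q i) *+ #|S' i|)).
  apply: eq_bigr => i _.
  rewrite -(big_ord_widen _ (fun _ => q_chi (Q i) *+ #|S' i|) (hNK i)).
  move: (N i) => m.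
  by rewrite sumr_const card_ord !mulr_natl.
move=> hmain.
have hlow : T * X - K0 <= \sum_(i < n) (N i)%:R * (#|S' i|%:R * q_chi (Q i)).
  have -> : T * X - K0 = \sum_(i < n) (T / q_p (Q i) - 1) * (#|S' i|%:R * q_chi (Q i)).
    rewrite /X /K0 mulr_sumr -sumrB; apply: eq_bigr => i _.
    rewrite mulrBl mul1r; congr (_ - _); ring.

  apply: ler_sum => i _; apply: ler_wpM2r; last exact: hNge.
  by rewrite mulr_ge0 // ltW.
move: (le_trans hlow hmain).
have -> : c%:R * (T + D - - D) = c%:R * T + c%:R * (D + D).
  by rewrite opprK -addrA mulrDr.
move: hTX; rewrite mulrBr => hTX.
have hcT : c%:R * T = T * c%:R by rewrite mulrC.
lra.
Qed.
End Pack.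

Section Routes.
Variables (R : realType) (V : finType) (E : rel V) (chi : R) (sink : V).
Hypothesis hchi : 0 < chi.

Lemma vr_le r : forall x tmin dl, valid_route E chi sink x tmin dl r -> tmin <= dl.
Proof.
elim: r => [|[y s] r IH] x tmin dl /=; first by case.
case=> _ [h1 h2]; have := IH _ _ _ h2 => h; apply: le_trans h1 _; apply: le_trans _ h; rewrite lerDl; exact: ltW.
Qed.

Lemma vr_tx r : forall x tmin dl k d, valid_route E chi sink x tmin dl r ->
  (k < size r)%N -> tmin <= (nth d (route_tx x r) k).2 /\ (nth d (route_tx x r) k).2 + chi <= dl.
Proof.
elim: r => [|[y s] r IH] x tmin dl k d //= [hE [hs hv]].
case: k => [|k] /= hk.
  by split => //; apply: vr_le hv.
have [h1 h2] := IH _ _ _ k d hv hk; split => //; apply: le_trans hs _; apply: le_trans _ h1; rewrite lerDl; exact: ltW.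
Qed.

Lemma vr_last r : forall x tmin dl d, valid_route E chi sink x tmin dl r ->
  (0 < size r)%N -> (nth d (route_tx x r) (size r).-1).1.2 = sink.
Proof.
elim: r => [|[y s] r IH] x tmin dl d //= [hE [hs hv]] _.
case: r IH hv => [|[y' s'] r'] IH hv /=; first by case: hv.
by have := IH y _ _ d hv isT.
Qed.

Lemma vr_nonempty r x tmin dl : valid_route E chi sink x tmin dl r -> x != sink -> (0 < size r)%N.
Proof. by case: r => [[->]|//]; rewrite eqxx. Qed.

Lemma size_route_tx (x : V) (r : seq (V * R)) : size (route_tx x r) = size r.
Proof. by elim: r x => [|[y s] r IH] x //=; rewrite IH. Qed.

Lemma first_tx (x : V) (r : seq (V * R)) d : (0 < size r)%N -> (nth d (route_tx x r) 0).1.1 = x.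
Proof. by case: r => [|[y s] r]. Qed.
End Routes.

Lemma active_list (R : realType) (V : finType) n (Q : 'I_n -> query R V) (sc : schedule R V n)
  (S' : 'I_n -> {set V}) (kf : 'I_n -> nat -> V -> nat) (K : nat) (tau : R) :
  (forall i, S' i \subset q_src (Q i)) ->
  (forall i t u, u \in q_src (Q i) -> (kf i t u < size (sc i t u))%N) ->
  exists L : seq (tx_id V n), [/\ uniq L, all (tx_active Q sc tau) L,
     size L = #|[pred x : 'I_n * 'I_K * V | (x.2 \in S' x.1.1) &&
        ((tx_of sc (x.1.1, nat_of_ord x.1.2, x.2, kf x.1.1 x.1.2 x.2)).2 <= tau <
         (tx_of sc (x.1.1, nat_of_ord x.1.2, x.2, kf x.1.1 x.1.2 x.2)).2 + q_chi (Q x.1.1))%R]| &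
     forall z, z \in L -> exists i t u, z = (i, t, u, kf i t u) /\ u \in S' i].
Proof.
move=> hsub hk.
set Pr := [pred x : 'I_n * 'I_K * V | _].
pose id := fun x : 'I_n * 'I_K * V => (x.1.1, nat_of_ord x.1.2, x.2, kf x.1.1 x.1.2 x.2) : tx_id V n.
exists (map id (enum Pr)); split.
- rewrite map_inj_uniq ?enum_uniq // => [[[i t] u]] [[i' t'] u'] /= [-> /val_inj -> -> _] //.
- apply/allP => z /mapP [x]; rewrite mem_enum => hx ->.
  move: hx; case: x => [[i t] u]; rewrite inE /= => /andP [hu hact].
  rewrite /tx_active /= (subsetP (hsub i) _ hu) hk ?(subsetP (hsub i) _ hu) //=.
  by move: hact; case: (nth _ _ _) => [[a b] s] /=.
- by rewrite size_map -cardE.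
- move=> z /mapP [[[i t] u]]; rewrite mem_enum inE /= => /andP[hu _] ->.
  by exists i, (t : nat), u.
Qed.

Lemma uniq_const (T : eqType) (a : T) (s : seq T) : uniq s -> all (pred1 a) s -> (size s <= 1)%N.
Proof.
case: s => [|x [|y s]] //= /andP[hx _] /and3P[/eqP hxa /eqP hya _].
by move: hx; rewrite inE hxa hya eqxx.
Qed.

Theorem theorem1 (R : realType) (V : finType) (pos : V -> pt R) (r : R)
    (sink : V) (M : interference_model R) (lam : R) (c1 : nat)
    (n : nat) (Q : 'I_n -> query R V) :
  injective pos -> 0 < r ->
  is_interference_radius M lam -> is_c1 M lam c1 ->
  (forall i, 0 < q_chi (Q i)) -> (forall i, 0 < q_p (Q i)) ->
  (forall i, sink \notin q_src (Q i)) ->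
  schedulable pos (comm_link pos r) sink M Q ->
  (forall v h : int, region_load pos Q lam v h <= c1%:R) /\
  \sum_(i < n) #|q_src (Q i)|%:R * q_chi (Q i) / q_p (Q i) <= 1.
Proof.
move=> pinj hr hlam hc1 hchi hp hsink [sc [hval hfree]].
have hnsink : forall i u, u \in q_src (Q i) -> u != sink.
  by move=> i u hu; apply/eqP => e; move: (hsink i); rewrite -e hu.
have hsz : forall i t u, u \in q_src (Q i) -> (0 < size (sc i t u))%N.
  by move=> i t u hu; exact: (@vr_nonempty _ _ _ _ _ _ _ _ _ (hval i t u hu) (hnsink i u hu)).
split.
- move=> v h.
  pose S' i := [set u in q_src (Q i) | in_region lam v h (pos u)].
  have -> : region_load pos Q lam v h = \sum_(i < n) #|S' i|%:R * q_chi (Q i) / q_p (Q i).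
    rewrite /region_load /node_load (exchange_big_dep xpredT) //=.
    apply: eq_bigr => i _.
    rewrite (eq_bigl (fun u => u \in S' i)); last by move=> u; rewrite inE andbC.
    by rewrite sumr_const -mulrA mulr_natl.
  apply: (@core R V n Q S' (fun i t u => (tx_of sc (i, t, u, 0%N)).2) c1) => //.
  + move=> i t u; rewrite inE => /andP[hu _].
    exact: (@vr_tx _ _ _ _ _ (hchi i) _ _ _ _ 0 (u, u, 0) (hval i t u hu) (hsz i t u hu)).
  + move=> K tau.
    have hsub : forall i, S' i \subset q_src (Q i).
      by move=> i; apply/subsetP => u; rewrite inE => /andP[].
    have [L [hu hall hsize hmem]] := @active_list R V n Q sc S' (fun _ _ _ => 0%N) K tau hsub
      (fun i t u hu => hsz i t u hu).
    rewrite -hsize.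
    have [hs [_ hM]] := hfree tau L hu hall.
    have hconc : concurrent_in_region M lam v h
        (map (fun x => (pos x.1.1, pos x.1.2)) (map (tx_of sc) L)).
      split => //; split.
      * have -> : map fst (map (fun x : V * V * R => (pos x.1.1, pos x.1.2)) (map (tx_of sc) L))
            = map pos (map (fun x : V * V * R => x.1.1) (map (tx_of sc) L)) by rewrite -!map_comp.
        by rewrite map_inj_uniq.
      * rewrite -map_comp; apply/allP => p /mapP [y /mapP [z hz ->] ->] /=.
        have [i [t [u [-> hu']]]] := hmem z hz.
        move: hu'; rewrite inE => /andP[hu1 hu2].
        by rewrite /tx_of /= first_tx ?hsz.
    by have := hc1.1 v h _ hconc; rewrite !size_map.
- apply: (@core R V n Q (fun i => q_src (Q i))
     (fun i t u => (tx_of sc (i, t, u, (size (sc i t u)).-1)).2) 1) => //.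
  + move=> i t u hu.
    apply: (@vr_tx _ _ _ _ _ (hchi i) _ _ _ _ _ (u, u, 0) (hval i t u hu)).
    by rewrite ltn_predL hsz.
  + move=> K tau.
    have [L [hu hall hsize hmem]] := @active_list R V n Q sc (fun i => q_src (Q i))
      (fun i t u => (size (sc i t u)).-1) K tau (fun i => subxx _)
      (fun i t u hu => ltac:(by rewrite ltn_predL hsz)).
    rewrite -hsize.
    have [_ [hs _]] := hfree tau L hu hall.
    rewrite -(size_map (tx_of sc)) -(size_map (fun x : V * V * R => x.1.2)).
    apply: (@uniq_const _ sink _ hs).
    apply/allP => p /mapP [y /mapP [z hz ->] ->] /=.
    have [i [t [u [-> hu']]]] := hmem z hz.
    apply/eqP; rewrite /tx_of /=.
    by apply: (@vr_last _ _ _ _ _ _ _ _ _ (u, u, 0) (hval i t u hu')); rewrite hsz.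
Qed.
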